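(* Let $\tilde X\in\mathbb{R}^{n\times k}$ have columns of unit Euclidean norm ($\Gamma_{\ell\ell}=1$ for all $\ell$, $\Gamma=\tilde X^t\tilde X$), let $0<\nu<1$, and let $\mathcal{I}\subset\{1,\dots,k\}$ satisfy $\tau(\mathcal{I})\le\nu$. Then for every $x\in\mathbb{R}^n$, $$(1+\nu)^{-1}\sum_{\ell\in\mathcal{I}}\Big(\sum_{i=1}^n x_i\tilde X_{i\ell}\Big)^2\le \|P_{V_{\mathcal{I}}}x\|_2^2\le (1-\nu)^{-1}\sum_{\ell\in\mathcal{I}}\Big(\sum_{i=1}^n x_i\tilde X_{i\ell}\Big)^2.$$
   Context: $\mathcal{G}_1,\dots,\mathcal{G}_p$ is a partition of $\{1,\dots,k\}$ into groups with $t_j=\#\mathcal{G}_j$; each index $\ell$ is written $\ell=(j,t)$ with $j$ the group containing $\ell$ and $t\in\{1,\dots,t_j\}$ its rank inside $\mathcal{G}_j$. $V_{\mathcal{I}}$ is the linear span of the columns $\tilde X_{\bullet\ell}$, $\ell\in\mathcal{I}$, and $P_{V_{\mathcal{I}}}$ the orthogonal projection onto it. $\gamma_{BT}=\sup\{|\Gamma_{(j,t)(j',t')}|: t\neq t'\}$ (over all $j,j'$ and admissible ranks), $\gamma_{BG}=\sup\{|\Gamma_{(j,t)(j',t)}|: j\ne j',\ t\le t_j\wedge t_{j'}\}$, and $\tau(\mathcal{I})=\#(\mathcal{I})\,\gamma_{BT}+\#\{j:\exists t,\ (j,t)\in\mathcal{I}\}\,\gamma_{BG}$. *)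

(* Defs.v *)
From Stdlib Require Import ClassicalEpsilon.
From mathcomp Require Import all_boot all_order all_algebra.
Set Implicit Arguments. Unset Strict Implicit. Unset Printing Implicit Defensive.
Import Order.TTheory GRing.Theory Num.Theory.
Local Open Scope ring_scope.

(* Group structure: index l : 'I_k is written l = (grp l, rk l), with
   grp l the group containing l and rk l in {1,..,t_{grp l}} its rank,
   the map l |-> (grp l, rk l) being injective. *)
Definition group_ranking (k p : nat) (grp : 'I_k -> 'I_p) (rk : 'I_k -> nat) :=
  (forall l l', grp l = grp l' -> rk l = rk l' -> l = l') /\
  (forall l, (1 <= rk l <= #|[set m | grp m == grp l]|)%N).

Section Defs.
Variables (R : realFieldType) (n k p : nat).

Definition Gram (X : 'M[R]_(n, k)) : 'M[R]_k := X^T *m X.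

(* gamma_BT = sup { |Gamma_{(j,t)(j',t')}| : t <> t' } (0 if empty) *)
Definition gammaBT (X : 'M[R]_(n, k)) (rk : 'I_k -> nat) : R :=
  \big[Num.max/0]_(l : 'I_k) \big[Num.max/0]_(l' : 'I_k | rk l != rk l')
     `|Gram X l l'|.

(* gamma_BG = sup { |Gamma_{(j,t)(j',t)}| : j <> j' } (0 if empty) *)
Definition gammaBG (X : 'M[R]_(n, k)) (grp : 'I_k -> 'I_p) (rk : 'I_k -> nat) : R :=
  \big[Num.max/0]_(l : 'I_k) \big[Num.max/0]_(l' : 'I_k | (grp l != grp l') && (rk l == rk l'))
     `|Gram X l l'|.

Definition tau (X : 'M[R]_(n, k)) (grp : 'I_k -> 'I_p) (rk : 'I_k -> nat)
    (I : {set 'I_k}) : R :=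
  #|I|%:R * gammaBT X rk + #|[set j | [exists l in I, grp l == j]]|%:R * gammaBG X grp rk.

Definition in_span (X : 'M[R]_(n, k)) (I : {set 'I_k}) (y : 'rV[R]_n) :=
  exists c : 'I_k -> R, y = \sum_(l in I) c l *: (col l X)^T.

Definition is_orth_proj (X : 'M[R]_(n, k)) (I : {set 'I_k}) (x y : 'rV[R]_n) :=
  in_span X I y /\ (forall l, l \in I -> (x - y) *m col l X = 0).

Definition orth_proj (X : 'M[R]_(n, k)) (I : {set 'I_k}) (x : 'rV[R]_n) : 'rV[R]_n :=
  epsilon (inhabits 0) (is_orth_proj X I x).

Definition sqnorm (y : 'rV[R]_n) : R := \sum_i (y 0 i) ^+ 2.

End Defs.

(* Main.v *)
From Stdlib Require Import ClassicalEpsilon.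
Require Import Defs.
From mathcomp Require Import all_boot all_order all_algebra.
From mathcomp Require Import ring lra.
Import Order.TTheory GRing.Theory Num.Theory.
Local Open Scope ring_scope.

Lemma W_bound (R : realFieldType) k (A : 'I_k -> 'I_k -> R) (nu : R)
  (symA : forall l l', A l l' = A l' l) (rowA : forall l, \sum_l' `|A l l'| <= nu)
  (t : R) (t0 : 0 < t) (u v : 'I_k -> R) :
  2 * t * `|\sum_l \sum_l' A l' l * u l' * v l|
    <= nu * (t^+2 * \sum_l u l ^+ 2 + \sum_l v l ^+ 2).
Proof.
have step1 : `|\sum_l \sum_l' A l' l * u l' * v l|
    <= \sum_l \sum_l' `|A l' l| * `|u l'| * `|v l|.
  apply: le_trans (ler_norm_sum _ _ _) _; apply: ler_sum => l _.
  apply: le_trans (ler_norm_sum _ _ _) _; apply: ler_sum => l' _.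
  by rewrite !normrM.
have step2 : 2 * t * (\sum_l \sum_l' `|A l' l| * `|u l'| * `|v l|)
   <= \sum_l \sum_l' `|A l' l| * (t^+2 * u l' ^+ 2 + v l ^+ 2).
  rewrite mulr_sumr; apply: ler_sum => l _.
  rewrite mulr_sumr; apply: ler_sum => l' _.
  have hA : 0 <= `|A l' l| := normr_ge0 _.
  have h : 2 * t * (`|u l'| * `|v l|) <= t^+2 * u l' ^+ 2 + v l ^+ 2.
    rewrite -[u l' ^+ 2]real_normK ?num_real // -[v l ^+ 2]real_normK ?num_real //.
    have := sqr_ge0 (t * `|u l'| - `|v l|); rewrite sqrrB; lra.
  have := ler_wpM2l hA h. rewrite !mulrA.
  have -> : 2 * t * `|A l' l| = `|A l' l| * 2 * t by ring.
  by rewrite -!mulrA.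
have step3 : \sum_l \sum_l' `|A l' l| * (t^+2 * u l' ^+ 2 + v l ^+ 2)
   = t^+2 * (\sum_l' u l' ^+ 2 * \sum_l `|A l' l|) + \sum_l v l ^+ 2 * \sum_l' `|A l l'|.
  transitivity (\sum_l (t^+2 * \sum_l' `|A l' l| * u l' ^+ 2 + v l ^+ 2 * \sum_l' `|A l l'|)).
    apply: eq_bigr => l _; rewrite !mulr_sumr -big_split /=.
    apply: eq_bigr => l' _; rewrite (symA l l'); ring.
  rewrite big_split /= -mulr_sumr exchange_big /=; congr (_ * _ + _).
  apply: eq_bigr => l' _; rewrite mulr_sumr; apply: eq_bigr => l _; ring.
have step4 : \sum_l' u l' ^+ 2 * \sum_l `|A l' l| <= nu * \sum_l u l ^+ 2.
  rewrite mulr_sumr; apply: ler_sum => l _; rewrite mulrC; apply: ler_wpM2r => //.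
  exact: sqr_ge0.
have step5 : \sum_l v l ^+ 2 * \sum_l' `|A l l'| <= nu * \sum_l v l ^+ 2.
  rewrite mulr_sumr; apply: ler_sum => l _; rewrite mulrC; apply: ler_wpM2r => //.
  exact: sqr_ge0.
have t2 : 0 <= t ^+ 2 := sqr_ge0 t.
have e4 := ler_wpM2l t2 step4.
have h2t : 0 <= 2 * t by lra.
have := ler_wpM2l h2t step1.
lra.
Qed.


Lemma bigmax_ge (R : realDomainType) (T : finType) (P : pred T) (F : T -> R) i :
  P i -> F i <= \big[Num.max/0]_(j | P j) F j.
Proof. by move=> Pi; rewrite (bigD1 i) //= le_max lexx. Qed.

Lemma bigmax_ge0 (R : realDomainType) (T : finType) (P : pred T) (F : T -> R) :
  0 <= \big[Num.max/0]_(j | P j) F j.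
Proof. by elim/big_rec: _ => // i x _ hx; rewrite le_max hx orbT. Qed.

Definition Amask (R : realFieldType) k (G : 'M[R]_k) (I : {set 'I_k}) (l l' : 'I_k) : R :=
  if [&& l \in I, l' \in I & l != l'] then G l l' else 0.

Arguments Amask {R k}.

Lemma rowA_bound (R : realFieldType) (n k p : nat) (grp : 'I_k -> 'I_p) (rk : 'I_k -> nat)
  (X : 'M[R]_(n, k)) (nu : R) (I : {set 'I_k}) :
  group_ranking grp rk -> tau X grp rk I <= nu ->
  forall l, \sum_l' `|Amask (Gram X) I l l'| <= nu.
Proof.
move=> [inj _] htau l.
have gT0 : 0 <= gammaBT X rk by apply: bigmax_ge0.
have gG0 : 0 <= gammaBG X grp rk by apply: bigmax_ge0.
have tau0 : 0 <= tau X grp rk I.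
  by rewrite /tau; apply: addr_ge0; apply: mulr_ge0.
case lI: (l \in I); last first.
  rewrite big1 ?(le_trans tau0 htau) // => l' _.
  by rewrite /Amask lI normr0.
set T := [set l' in I | rk l != rk l'].
set S := [set l' in I | (l' != l) && (rk l' == rk l)].
set Gs := [set j | [exists l0 in I, grp l0 == j]].
apply: (le_trans _ htau).
apply: (@le_trans _ _ (\sum_l' ((if l' \in T then gammaBT X rk else 0)
                              + (if l' \in S then gammaBG X grp rk else 0)))).
  apply: ler_sum => l' _.
  rewrite /Amask lI /=.
  case l'I: (l' \in I) => /=; last by rewrite normr0; apply: addr_ge0; case: ifP.
  case: eqP => [_|/eqP nll']; first by rewrite normr0; apply: addr_ge0; case: ifP.
  rewrite /= !inE l'I /=.
  case: (boolP (rk l == rk l')) => hrk /=.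
    rewrite add0r (eq_sym l') nll' eq_sym hrk /=.
    apply: le_trans (@bigmax_ge _ _ _ _ l isT).
    apply: (@bigmax_ge _ _ _ (fun l' => `|Gram X l l'|) l').
    rewrite (eqP hrk) eqxx andbT.
    by apply/eqP => hg; move: nll'; rewrite (inj _ _ hg (eqP hrk)) eqxx.
  rewrite -[X in X <= _]addr0; apply: lerD; last by case: ifP.
  apply: le_trans (@bigmax_ge _ _ _ _ l isT).
  exact: (@bigmax_ge _ _ _ (fun l' => `|Gram X l l'|) l').
rewrite big_split /= -!big_mkcond /= !sumr_const -[_ *+ #|T|]mulr_natl -[_ *+ #|S|]mulr_natl /tau.
apply: lerD; apply: ler_wpM2r => //; rewrite ler_nat.
  by apply: subset_leq_card; apply/subsetP => l'; rewrite /T inE => /andP[].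
rewrite -(card_in_imset (f := grp)); last first.
  move=> a b; rewrite /S !inE => /and3P[_ _ /eqP ha] /and3P[_ _ /eqP hb] hg.
  by apply: inj => //; rewrite ha hb.
apply: subset_leq_card; apply/subsetP => j /imsetP[l' l'S ->].
rewrite inE; apply/existsP; exists l'.
rewrite eqxx andbT; move: l'S; rewrite /S inE. by case/and3P.
Qed.


Lemma GramE (R : realFieldType) n k (X : 'M[R]_(n,k)) l l' :
  Gram X l l' = \sum_i X i l * X i l'.
Proof. by rewrite /Gram !mxE; apply: eq_bigr => i _; rewrite !mxE. Qed.

Lemma decomp (R : realFieldType) k (G : 'M[R]_k) (I : {set 'I_k}) (Gd : forall l, G l l = 1)
  (d : 'I_k -> R) (dI : forall l, l \notin I -> d l = 0) l :
  l \in I -> \sum_l' d l' * G l' l = d l + \sum_l' Amask G I l' l * d l'.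
Proof.
move=> lI; rewrite (bigD1 l) //= Gd mulr1 [in RHS](bigD1 l) //= /Amask eqxx !andbF mul0r add0r.
congr (_ + _); apply: eq_bigr => l' nl; rewrite lI nl /= andbT.
case: (boolP (l' \in I)) => hl /=; first by rewrite mulrC.
by rewrite dI // !mul0r.
Qed.

Lemma Amask_out (R : realFieldType) k (G : 'M[R]_k) (I : {set 'I_k}) l l' :
  l \notin I -> Amask G I l' l = 0.
Proof. by move=> /negbTE lI; rewrite /Amask lI andbF. Qed.

Lemma core (R : realFieldType) (nu N Ce Ee : R) : 0 < nu -> nu < 1 -> 0 <= N ->
  2 * `|Ce| <= nu * (N + N) -> 2 * nu * `|Ee| <= nu * (nu^+2 * N + Ee) ->
  0 <= nu^+2 * N + 2 * nu * Ce + Ee ->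
  N + 2 * Ce + Ee <= (1 + nu) * (N + Ce) /\ (1 - nu) * (N + Ce) <= N + 2 * Ce + Ee.
Proof.
move=> nu0 nu1 N0 hC hE hF.
have c1 := ler_norm Ce. have c2 : - Ce <= `|Ce| by rewrite -normrN ler_norm.
have e1 := ler_norm Ee.
have hCb : `|Ce| <= nu * N by lra.
have hEb : Ee <= nu ^+ 2 * N.
  have : nu * (2 * `|Ee|) <= nu * (nu ^+ 2 * N + Ee) by rewrite mulrA (mulrC nu 2).
  rewrite ler_pM2l //; lra.
have h1 : 0 <= (1 - nu) * (nu * N - Ce) by apply: mulr_ge0; lra.
have h2 : 0 <= (1 - nu) * (nu * N + Ce) by apply: mulr_ge0; lra.
split; nra.
Qed.


Lemma ycoord (R : realFieldType) n k (X : 'M[R]_(n,k)) (I : {set 'I_k}) (c : 'I_k -> R) i :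
  (\sum_(l in I) c l *: (col l X)^T) 0 i = \sum_(l in I) c l * X i l.
Proof. by rewrite summxE; apply: eq_bigr => l _; rewrite !mxE. Qed.

Lemma yXE (R : realFieldType) n k (X : 'M[R]_(n,k)) (I : {set 'I_k}) (c : 'I_k -> R) l :
  \sum_i (\sum_(l' in I) c l' *: (col l' X)^T) 0 i * X i l
  = \sum_l' (if l' \in I then c l' else 0) * Gram X l' l.
Proof.
under eq_bigr do rewrite ycoord mulr_suml.
rewrite exchange_big /= big_mkcond /=; apply: eq_bigr => l' _.
case: ifP => _; last by rewrite mul0r.
by rewrite GramE mulr_sumr; apply: eq_bigr => i _; ring.
Qed.

Lemma orthE (R : realFieldType) n k (X : 'M[R]_(n,k)) (x y : 'rV[R]_n) l :
  (x - y) *m col l X = 0 -> \sum_i x 0 i * X i l = \sum_i y 0 i * X i l.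
Proof.
move/matrixP/(_ 0 0); rewrite !mxE.
under eq_bigr do rewrite !mxE mulrBl.
by rewrite sumrB => /eqP; rewrite subr_eq0 => /eqP.
Qed.

Lemma Amask_sym (R : realFieldType) n k (X : 'M[R]_(n,k)) (I : {set 'I_k}) l l' :
  Amask (Gram X) I l l' = Amask (Gram X) I l' l.
Proof.
rewrite /Amask eq_sym andbCA !GramE.
by case: ifP => // _; apply: eq_bigr => i _; rewrite mulrC.
Qed.

Lemma Wform (R : realFieldType) k (A : 'I_k -> 'I_k -> R) (u v : 'I_k -> R) :
  \sum_l (\sum_l' A l' l * u l') * v l = \sum_l \sum_l' A l' l * u l' * v l.
Proof. by apply: eq_bigr => l _; rewrite mulr_suml. Qed.


Section Main.
Variables (R : realFieldType) (n k : nat) (X : 'M[R]_(n, k)) (I : {set 'I_k}) (nu : R).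
Hypothesis Gd : forall l, Gram X l l = 1.
Hypothesis nu0 : 0 < nu.
Hypothesis nu1 : nu < 1.
Hypothesis rowA : forall l, \sum_l' `|Amask (Gram X) I l l'| <= nu.

Let A := Amask (Gram X) I.
Let symA : forall l l', A l l' = A l' l.
Proof. by move=> l l'; apply: Amask_sym. Qed.

Lemma Ce_bound (d : 'I_k -> R) :
  2 * `|\sum_l d l * \sum_l' A l' l * d l'| <= nu * (\sum_l d l ^+ 2 + \sum_l d l ^+ 2).
Proof.
have := @W_bound _ _ A nu symA rowA 1 ltr01 d d; rewrite expr1n mul1r mulr1.
congr (2 * `|_| <= _); rewrite -Wform; apply: eq_bigr => l _; exact: mulrC.
Qed.

Lemma Ee_bound (d e : 'I_k -> R) : (forall l, e l = \sum_l' A l' l * d l') ->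
  2 * nu * `|\sum_l e l ^+ 2| <= nu * (nu ^+ 2 * \sum_l d l ^+ 2 + \sum_l e l ^+ 2).
Proof.
move=> he; have := @W_bound _ _ A nu symA rowA nu nu0 d e.
congr (_ * `|_| <= _); rewrite -Wform; apply: eq_bigr => l _; by rewrite expr2 he.
Qed.

Lemma unit_M :
  (\matrix_(l', l) (if (l' \in I) && (l \in I) then Gram X l' l else (l' == l)%:R))
    \in unitmx.
Proof.
rewrite -row_free_unit -kermx_eq0; apply/rowV0P => v /sub_kermxP vM0.
set d := fun l => if l \in I then v 0 l else 0.
have dI : forall l, l \notin I -> d l = 0 by move=> l /negbTE hl; rewrite /d hl.
set e := fun l => \sum_l' A l' l * d l'.
have eI : forall l, l \notin I -> e l = 0.
  by move=> l hl; apply: big1 => l' _; rewrite /A Amask_out // mul0r.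
have hv : forall l, (v *m \matrix_(l', l) (if (l' \in I) && (l \in I) then Gram X l' l
                       else (l' == l)%:R)) 0 l = 0 by move=> l; rewrite vM0 mxE.
have hout : forall l, l \notin I -> v 0 l = 0.
  move=> l /negbTE hl; have := hv l; rewrite mxE (bigD1 l) //= mxE hl andbF eqxx mulr1.
  rewrite big1 ?addr0 // => l' nl; rewrite mxE hl andbF.
  by rewrite (negbTE nl) mulr0.
have hde : forall l, d l + e l = 0.
  move=> l; case: (boolP (l \in I)) => hl; last by rewrite dI // eI // addr0.
  rewrite -decomp // -[RHS](hv l) mxE; apply: eq_bigr => l' _; rewrite [X in _ = _ * X]mxE hl andbT /d.
  case: ifP => hl' //; rewrite hout ?hl' // mul0r.
  by case: eqP => [el|]; rewrite ?mulr0 // mul0r.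
have hN : \sum_l d l ^+ 2 + \sum_l d l * e l = 0.
  rewrite -big_split /=; apply: big1 => l _.
  by rewrite expr2 -mulrDr hde mulr0.
have hC := Ce_bound d.
have N0 : 0 <= \sum_l d l ^+ 2 by apply: sumr_ge0 => l _; exact: sqr_ge0.
have c2 : - (\sum_l d l * e l) <= `|\sum_l d l * e l| by rewrite -normrN ler_norm.
have hN0 : \sum_l d l ^+ 2 = 0.
  move: hN hC N0 c2; set N := \sum_l d l ^+ 2; set Ce := \sum_l d l * e l.
  move=> hN hC N0 c2.
  have h : (1 - nu) * N <= 0 by nra.
  rewrite pmulr_rle0 in h; last by rewrite subr_gt0.
  by apply/eqP; rewrite eq_le h N0.
apply/rowP => l; rewrite mxE.
case: (boolP (l \in I)) => hl; last exact: hout.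
have : d l ^+ 2 = 0.
  apply/eqP; move/eqP: hN0; rewrite psumr_eq0 => [/allP H|l' _]; last exact: sqr_ge0.
  by apply: H; rewrite mem_index_enum.
by rewrite /d hl => /eqP; rewrite sqrf_eq0 => /eqP.
Qed.

Lemma exists_proj x : exists y, is_orth_proj X I x y.
Proof.
have uM := unit_M.
set M := \matrix_(l', l) _ in uM.
set bb := \row_l (if l \in I then \sum_i x 0 i * X i l else 0) : 'rV[R]_k.
set c := bb *m invmx M.
have cM : c *m M = bb by rewrite /c mulmxKV.
exists (\sum_(l in I) c 0 l *: (col l X)^T); split; first by exists (fun l => c 0 l).
move=> l lI.
have h : \sum_j c 0 j * M j l = \sum_i x 0 i * X i l.
  have := congr1 (fun m : 'rV[R]_k => m 0 l) cM; rewrite /= [in RHS]mxE lI => <-.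
  by rewrite mxE.
apply/matrixP => i j; rewrite !ord1 [RHS]mxE mxE.
under eq_bigr do rewrite !mxE mulrBl.
rewrite sumrB yXE -h; apply/eqP; rewrite subr_eq0; apply/eqP; apply: eq_bigr => m _.
rewrite /M mxE lI andbT; case: ifP => hj //; rewrite mul0r.
have -> : (m == l) = false by apply/negbTE/eqP => ejl; move: hj; rewrite ejl lI.
by rewrite mulr0.
Qed.

Lemma bound x y c : y = \sum_(l in I) c l *: (col l X)^T ->
  (forall l, l \in I -> (x - y) *m col l X = 0) ->
  \sum_(l in I) (\sum_i x 0 i * X i l) ^+ 2 <= (1 + nu) * sqnorm y /\
  (1 - nu) * sqnorm y <= \sum_(l in I) (\sum_i x 0 i * X i l) ^+ 2.
Proof.
move=> yE orth.
set d := fun l => if l \in I then c l else 0.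
have dI : forall l, l \notin I -> d l = 0 by move=> l /negbTE hl; rewrite /d hl.
set e := fun l => \sum_l' A l' l * d l'.
have eI : forall l, l \notin I -> e l = 0.
  by move=> l hl; apply: big1 => l' _; rewrite /A Amask_out // mul0r.
have yd : forall i, y 0 i = \sum_l d l * X i l.
  move=> i; rewrite yE ycoord big_mkcond; apply: eq_bigr => l _.
  by rewrite /d; case: ifP => // _; rewrite mul0r.
have yX : forall l, \sum_i y 0 i * X i l = \sum_l' d l' * Gram X l' l.
  by move=> l; rewrite yE yXE.
have hb : forall l, l \in I -> \sum_i x 0 i * X i l = d l + e l.
  by move=> l lI; rewrite (@orthE _ _ _ _ _ _ _ (orth l lI)) yX (@decomp _ _ _ I Gd _ dI _ lI).
set N := \sum_l d l ^+ 2.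
set Ce := \sum_l d l * e l.
set Ee := \sum_l e l ^+ 2.
have hS : sqnorm y = N + Ce.
  rewrite /sqnorm; transitivity (\sum_l d l * \sum_i y 0 i * X i l).
    under eq_bigr do rewrite expr2 {2}yd mulr_sumr.
    rewrite exchange_big; apply: eq_bigr => l _; rewrite mulr_sumr.
    by apply: eq_bigr => i _; rewrite mulrCA.
  rewrite /N /Ce -big_split /=; apply: eq_bigr => l _; rewrite yX /e /=.
  case: (boolP (l \in I)) => hl; first by rewrite (@decomp _ _ _ I Gd _ dI _ hl); ring.
  by rewrite !dI //; ring.
have hQ : \sum_(l in I) (\sum_i x 0 i * X i l) ^+ 2 = N + 2 * Ce + Ee.
  transitivity (\sum_l (d l + e l) ^+ 2).
    rewrite big_mkcond; apply: eq_bigr => l _; case: ifP => hl; first by rewrite hb.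
    by rewrite dI ?eI ?hl // addr0 expr2 mulr0.
  rewrite /N /Ce /Ee mulr_sumr -!big_split /=; apply: eq_bigr => l _; ring.
have hF : 0 <= nu ^+ 2 * N + 2 * nu * Ce + Ee.
  have -> : nu ^+ 2 * N + 2 * nu * Ce + Ee = \sum_l (nu * d l + e l) ^+ 2.
    rewrite /N /Ce /Ee !mulr_sumr -!big_split /=; apply: eq_bigr => l _; ring.
  by apply: sumr_ge0 => l _; exact: sqr_ge0.
have hC := Ce_bound d.
have hE := @Ee_bound d e (fun l => erefl).
have N0 : 0 <= N by apply: sumr_ge0 => l _; exact: sqr_ge0.
rewrite hS hQ; exact: core.
Qed.

End Main.


Theorem lemma2 (R : realFieldType) (n k p : nat) (grp : 'I_k -> 'I_p) (rk : 'I_k -> nat)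
  (X : 'M[R]_(n, k)) (nu : R) (I : {set 'I_k}) :
  group_ranking grp rk ->
  (forall l, Gram X l l = 1) ->
  0 < nu < 1 ->
  tau X grp rk I <= nu ->
  forall x : 'rV[R]_n,
    (1 + nu)^-1 * \sum_(l in I) (\sum_i x 0 i * X i l) ^+ 2
      <= sqnorm (orth_proj X I x) /\
    sqnorm (orth_proj X I x)
      <= (1 - nu)^-1 * \sum_(l in I) (\sum_i x 0 i * X i l) ^+ 2.
Proof.
move=> hgr Gd /andP[nu0 nu1] htau x.
have rowA := @rowA_bound _ _ _ _ _ _ _ _ _ hgr htau.
have [y0 hy0] := @exists_proj R n k X I nu Gd nu1 rowA x.
have [[c yE] orth] : is_orth_proj X I x (orth_proj X I x).
  by apply: epsilon_spec; exists y0.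
have [h1 h2] := @bound R n k X I nu Gd nu0 nu1 rowA x _ c yE orth.
have p1 : 0 < 1 + nu by apply: addr_gt0.
have p2 : 0 < 1 - nu by rewrite subr_gt0.
split.
  have hi : 0 <= (1 + nu)^-1 by rewrite invr_ge0 ltW.
  apply: (le_trans (ler_wpM2l hi h1)).
  by rewrite mulrA mulVf ?mul1r // lt0r_neq0.
rewrite -[X in X <= _](mulKf (lt0r_neq0 p2)).
apply: ler_wpM2l h2; by rewrite invr_ge0 ltW.
Qed.
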